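(* Let $F:\mathcal{G}_{\Sigma,\Delta,\pi}\to\mathcal{G}_{\Sigma,\Delta,\pi}$ be a causal graph dynamics with a monotonic local rule $f$ of radius $r$ (so $F$ is monotonic), and assume that $\mathrm{Conj}_F(R)$ is a singleton $\{\overline{F}(R)\}$ for every renaming $R$. Then the assignment $\widetilde{f}:\mathbf{D}^r_{\Sigma,\Delta,\pi}\to\mathbf{G}_{\Sigma,\Delta,\pi}$ given on objects by $\widetilde{f}((H,\{c\}))=f((H,c))$ and $\widetilde{f}((\varnothing,\emptyset))=\varnothing$, and on a morphism $m:(H,C)\to(H',C')$ by the morphism $\widetilde{f}(m):\widetilde{f}((H,C))\to\widetilde{f}((H',C'))$ with $|\widetilde{f}(m)|=\overline{F}(|m|)$, is a well-defined functor.
   Context: Fix an uncountably infinite set $\mathcal{V}$, sets $\Sigma,\Delta$, finite $\pi$. Graphs: countable $V(G)\subset\mathcal{V}$, a set $E(G)$ of pairwise disjoint two-element subsets of $V(G)\times\pi$, partial labelings $\sigma(G),\delta(G)$; $\subseteq$ is componentwise inclusion. Renamings are bijections of $\mathcal{V}$ acting naturally on graphs and pointed graphs ($V(R(G))=R(V(G))$, edges $\{u\!:\!i,v\!:\!j\}\mapsto\{R(u)\!:\!i,R(v)\!:\!j\}$, labelings precomposed with $R^{-1}$, $R(G,v)=(R(G),R(v))$). $\mathrm{Conj}_F(R)$ is the set of renamings $R'$ with $F\circ R=R'\circ F$. Disk $G^r_c=(H,c)$: vertices at distance $\le r+1$ from $c$, edges of $G$ with an endpoint at distance $\le r$, vertex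 labels restricted to distance $\le r$, edge labels of kept edges; $\mathcal{D}^r$ the set of radius-$r$ disks, ordered by $(H,c)\subseteq(H',c')$ iff $H\subseteq H'$ and $c=c'$. A local rule of radius $r$ is $f:\mathcal{D}^r\to$ graphs with: each renaming $R$ has $R'$ with $f\circ R=R'\circ f$; families of disks with empty intersection have images with empty intersection; bounded $|V(f(D))|$; $f(G^r_u),f(G^r_v)$ consistent for all $G,u,v$. A CGD is $F(G)=\bigcup_{v\in V(G)}f(G^r_v)$. Category $\mathbf{G}_{\Sigma,\Delta,\pi}$: objects graphs, morphism $m:G\to H$ a renaming $|m|$ with $|m|(G)\subseteq H$, composition by composition of renamings. Category $\mathbf{D}^r_{\Sigma,\Delta,\pi}$: objects $(H,\{c\})$ for $(H,c)\in\mathcal{D}^r$ and $(\varnothing,\emptyset)$; morphisms $m:(H_1,C_1)\to(H_2,C_2)$ are morphisms $m:H_1\to H_2$ of $\mathbf{G}_{\Sigma,\Delta,\pi}$ with $|m|(C_1)\subseteq C_2$. *)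

(* Defs.v *)
From Stdlib Require Import List Arith ClassicalEpsilon.
Set Implicit Arguments.

Section CGD.
Variables (V Sig Del Pi : Type).

(** Ports and edges: an edge is a subset of V x Pi (required to be a
    two-element set in well-formed graphs). *)
Definition port := (V * Pi)%type.
Definition edge := port -> Prop.

Record graph := Graph {
  gV : V -> Prop;
  gE : edge -> Prop;
  gsig : V -> option Sig;
  gdel : edge -> option Del }.

Definition pgraph := (graph * V)%type.

Definition countable_set (A : V -> Prop) : Prop :=
  exists g : V -> nat, forall u v, A u -> A v -> g u = g v -> u = v.

Definition two_element (e : edge) : Prop :=
  exists p q : port, p <> q /\ forall x, e x <-> (x = p \/ x = q).

Definition wf (G : graph) : Prop :=
  countable_set (gV G) /\
  (forall e, gE G e -> two_element e /\ forall p, e p -> gV G (fst p)) /\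
  (forall e e', gE G e -> gE G e' -> (exists p, e p /\ e' p) -> e = e') /\
  (forall v a, gsig G v = Some a -> gV G v) /\
  (forall e a, gdel G e = Some a -> gE G e).

Definition gsub (G H : graph) : Prop :=
  (forall v, gV G v -> gV H v) /\
  (forall e, gE G e -> gE H e) /\
  (forall v a, gsig G v = Some a -> gsig H v = Some a) /\
  (forall e a, gdel G e = Some a -> gdel H e = Some a).

Definition psub (D D' : pgraph) : Prop := gsub (fst D) (fst D') /\ snd D = snd D'.

Definition empty_graph : graph :=
  Graph (fun _ => False) (fun _ => False) (fun _ => None) (fun _ => None).

Record renaming := Renaming {
  rn : V -> V;
  rn_inv : V -> V;
  rn_K : forall x, rn_inv (rn x) = x;
  rn_KV : forall x, rn (rn_inv x) = x }.

Definition rid : renaming :=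
  @Renaming (fun x => x) (fun x => x) (fun x => eq_refl) (fun x => eq_refl).

Lemma rcomp_K (R2 R1 : renaming) :
  forall x, rn_inv R1 (rn_inv R2 (rn R2 (rn R1 x))) = x.
Proof. intro x. rewrite rn_K, rn_K. reflexivity. Qed.
Lemma rcomp_KV (R2 R1 : renaming) :
  forall x, rn R2 (rn R1 (rn_inv R1 (rn_inv R2 x))) = x.
Proof. intro x. rewrite rn_KV, rn_KV. reflexivity. Qed.

Definition rcomp (R2 R1 : renaming) : renaming :=
  @Renaming (fun x => rn R2 (rn R1 x)) (fun x => rn_inv R1 (rn_inv R2 x))
    (rcomp_K R2 R1) (rcomp_KV R2 R1).

Definition edge_pre (g : V -> V) (e : edge) : edge := fun p => e (g (fst p), snd p).

(** natural action of a renaming on graphs: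
    V(R G) = R(V G), edges u:i-v:j mapped to R u:i - R v:j,
    labelings precomposed with R^-1. *)
Definition rename (R : renaming) (G : graph) : graph :=
  Graph (fun v => gV G (rn_inv R v))
        (fun e => gE G (edge_pre (rn R) e))
        (fun v => gsig G (rn_inv R v))
        (fun e => gdel G (edge_pre (rn R) e)).

Definition prename (R : renaming) (D : pgraph) : pgraph :=
  (rename R (fst D), rn R (snd D)).

Definition adj (G : graph) (u v : V) : Prop :=
  exists e i j, gE G e /\ e (u, i) /\ e (v, j).

Fixpoint dist_le (G : graph) (n : nat) (u v : V) : Prop :=
  match n with
  | 0 => gV G u /\ u = v
  | S n => dist_le G n u v \/ exists w, dist_le G n u w /\ adj G w v
  end.

Definition decP (P : Prop) : bool :=
  if excluded_middle_informative P then true else false.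

Definition disk_edges (G : graph) (r : nat) (c : V) (e : edge) : Prop :=
  gE G e /\ exists p, e p /\ dist_le G r c (fst p).

Definition disk (G : graph) (r : nat) (c : V) : pgraph :=
  (Graph (fun v => dist_le G (S r) c v)
         (disk_edges G r c)
         (fun v => if decP (dist_le G r c v) then gsig G v else None)
         (fun e => if decP (disk_edges G r c e) then gdel G e else None),
   c).

Definition is_disk (r : nat) (D : pgraph) : Prop :=
  exists G c, wf G /\ gV G c /\ D = disk G r c.

(** consistency of two graphs (their union is a graph) *)
Definition consistent (G H : graph) : Prop :=
  (forall e e', gE G e -> gE H e' -> (exists p, e p /\ e' p) -> e = e') /\
  (forall v a b, gsig G v = Some a -> gsig H v = Some b -> a = b) /\
  (forall e a b, gdel G e = Some a -> gdel H e = Some b -> a = b).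

Definition local_rule (r : nat) (f : pgraph -> graph) : Prop :=
  (forall D, is_disk r D -> wf (f D)) /\
  (forall R : renaming, exists R' : renaming,
     forall D, is_disk r D -> f (prename R D) = rename R' (f D)) /\
  (forall S : pgraph -> Prop, (forall D, S D -> is_disk r D) ->
     (forall v, ~ (forall D, S D -> gV (fst D) v)) ->
     (forall v, ~ (forall D, S D -> gV (f D) v))) /\
  (exists b : nat, forall D, is_disk r D ->
     exists l : list V, length l <= b /\ forall v, gV (f D) v -> In v l) /\
  (forall G u v, wf G -> gV G u -> gV G v ->
     consistent (f (disk G r u)) (f (disk G r v))).

Definition monotonic_rule (r : nat) (f : pgraph -> graph) : Prop :=
  forall D D', is_disk r D -> is_disk r D' -> psub D D' -> gsub (f D) (f D').

Definition pick_opt {A : Type} (P : A -> Prop) : option A :=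
  match excluded_middle_informative (exists a, P a) with
  | left h => Some (proj1_sig (constructive_indefinite_description _ h))
  | right _ => None
  end.

Definition gunion {I : Type} (P : I -> Prop) (Gs : I -> graph) : graph :=
  Graph (fun v => exists i, P i /\ gV (Gs i) v)
        (fun e => exists i, P i /\ gE (Gs i) e)
        (fun v => pick_opt (fun a => exists i, P i /\ gsig (Gs i) v = Some a))
        (fun e => pick_opt (fun a => exists i, P i /\ gdel (Gs i) e = Some a)).

Definition CGD (r : nat) (f : pgraph -> graph) (G : graph) : graph :=
  gunion (fun v => gV G v) (fun v => f (disk G r v)).

Definition Conj (F : graph -> graph) (R : renaming) (R' : renaming) : Prop :=
  forall G, wf G -> F (rename R G) = rename R' (F G).

Definition Gmor (G H : graph) (m : renaming) : Prop :=
  wf G /\ wf H /\ gsub (rename m G) H.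

(** Category D^r: objects (H,{c}) (encoded (H, Some c)) and (empty, emptyset)
    (encoded (empty_graph, None)). *)
Definition Dobject := (graph * option V)%type.

Definition Dobj (r : nat) (X : Dobject) : Prop :=
  (exists c, snd X = Some c /\ is_disk r (fst X, c)) \/ X = (empty_graph, None).

Definition Dmor (r : nat) (X Y : Dobject) (m : renaming) : Prop :=
  Dobj r X /\ Dobj r Y /\ Gmor (fst X) (fst Y) m /\
  (forall c, snd X = Some c -> snd Y = Some (rn m c)).

Definition ftilde_obj (f : pgraph -> graph) (X : Dobject) : graph :=
  match snd X with
  | Some c => f (fst X, c)
  | None => empty_graph
  end.

Definition ftilde_is_functor (r : nat) (f : pgraph -> graph)
    (Fbar : renaming -> renaming) : Prop :=
  (forall X, Dobj r X -> wf (ftilde_obj f X)) /\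
  (forall X Y m, Dmor r X Y m -> Gmor (ftilde_obj f X) (ftilde_obj f Y) (Fbar m)) /\
  (forall X, Dobj r X -> Fbar rid = rid) /\
  (forall X Y Z m1 m2, Dmor r X Y m1 -> Dmor r Y Z m2 ->
     Fbar (rcomp m2 m1) = rcomp (Fbar m2) (Fbar m1)).

End CGD.

Definition uncountable (V : Type) : Prop :=
  ~ exists g : V -> nat, forall u v, g u = g v -> u = v.

Definition finite_type (T : Type) : Prop := exists l : list T, forall x, In x l.

(* Main.v *)
Require Import Defs.
From Stdlib Require Import List Arith ClassicalEpsilon.
From Stdlib Require Import Setoid FunctionalExtensionality PropExtensionality.

Section Pf.
Variables (V Sig Del Pi : Type).

Lemma graph_eq (G H : graph V Sig Del Pi) :
  gV G = gV H -> gE G = gE H -> gsig G = gsig H -> gdel G = gdel H -> G = H.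
Proof. destruct G, H; simpl; intros; subst; reflexivity. Qed.

Lemma edge_pre_id (e : edge V Pi) : edge_pre (fun x => x) e = e.
Proof. apply functional_extensionality; intros [x i]; reflexivity. Qed.

Lemma rename_rid (G : graph V Sig Del Pi) : rename (rid V) G = G.
Proof.
  apply graph_eq; try reflexivity; apply functional_extensionality; intro e;
  cbn; rewrite edge_pre_id; reflexivity.
Qed.

Lemma edge_pre_K (R : renaming V) (e : edge V Pi) :
  edge_pre (rn R) (edge_pre (rn_inv R) e) = e.
Proof. apply functional_extensionality; intros [x i]; unfold edge_pre; simpl; rewrite rn_K; reflexivity. Qed.

Lemma edge_pre_KV (R : renaming V) (e : edge V Pi) :
  edge_pre (rn_inv R) (edge_pre (rn R) e) = e.
Proof. apply functional_extensionality; intros [x i]; unfold edge_pre; simpl; rewrite rn_KV; reflexivity. Qed.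

Lemma rn_inj (R : renaming V) a b : rn R a = rn R b -> a = b.
Proof. intro H. rewrite <- (rn_K R a), <- (rn_K R b), H. reflexivity. Qed.

Lemma adj_rename (R : renaming V) (G : graph V Sig Del Pi) a b :
  adj (rename R G) a b <-> adj G (rn_inv R a) (rn_inv R b).
Proof.
  split.
  - intros [e [i [j [He [Ha Hb]]]]]. exists (edge_pre (rn R) e), i, j.
    split; [exact He|]. unfold edge_pre; simpl; rewrite !rn_KV; auto.
  - intros [e [i [j [He [Ha Hb]]]]]. exists (edge_pre (rn_inv R) e), i, j.
    split; [|split; assumption].
    change (gE G (edge_pre (rn R) (edge_pre (rn_inv R) e))). rewrite edge_pre_K; exact He.
Qed.

Lemma dist_rename (R : renaming V) (G : graph V Sig Del Pi) n :
  forall a b, dist_le (rename R G) n a b <-> dist_le G n (rn_inv R a) (rn_inv R b).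
Proof.
  induction n; intros a b; simpl.
  - split; intros [H1 H2]; split; auto.
    + subst; auto.
    + rewrite <- (rn_KV R a), <- (rn_KV R b), H2. reflexivity.
  - rewrite IHn. split; intros [H|[w [Hw Ha]]]; auto; right.
    + exists (rn_inv R w). rewrite <- IHn, <- adj_rename. auto.
    + exists (rn R w). rewrite IHn, adj_rename, rn_K. auto.
Qed.

Lemma disk_edges_rename (R : renaming V) (G : graph V Sig Del Pi) r c e :
  disk_edges (rename R G) r (rn R c) e <-> disk_edges G r c (edge_pre (rn R) e).
Proof.
  unfold disk_edges. split; intros [He [p [Hp Hd]]]; split; auto.
  - exists (rn_inv R (fst p), snd p). destruct p as [x i]. simpl in *.
    unfold edge_pre; simpl. rewrite rn_KV. split; auto.
    rewrite dist_rename, rn_K in Hd. auto.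
  - exists (rn R (fst p), snd p). destruct p as [x i]. simpl in *.
    split; auto. rewrite dist_rename, !rn_K. auto.
Qed.

Lemma disk_rename (R : renaming V) (G : graph V Sig Del Pi) r c :
  disk (rename R G) r (rn R c) = prename R (disk G r c).
Proof.
  unfold disk, prename; simpl. f_equal. apply graph_eq; simpl.
  - apply functional_extensionality; intro v. apply propositional_extensionality.
    pose proof (dist_rename R G (S r) (rn R c) v) as H. rewrite rn_K in H. exact H.
  - apply functional_extensionality; intro e. apply propositional_extensionality.
    apply disk_edges_rename.
  - apply functional_extensionality; intro v.
    assert (E : dist_le (rename R G) r (rn R c) v = dist_le G r c (rn_inv R v)).
    { apply propositional_extensionality. rewrite dist_rename, rn_K. reflexivity. }
    rewrite E. reflexivity.
  - apply functional_extensionality; intro e.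
    assert (E : disk_edges (rename R G) r (rn R c) e = disk_edges G r c (edge_pre (rn R) e)).
    { apply propositional_extensionality. apply disk_edges_rename. }
    rewrite E. reflexivity.
Qed.

Lemma wf_rename (R : renaming V) (G : graph V Sig Del Pi) : wf G -> wf (rename R G).
Proof.
  intros [Hc [He [Hd [Hs Hdl]]]]. split; [|split; [|split; [|split]]].
  - destruct Hc as [g Hg]. exists (fun v => g (rn_inv R v)). intros u v Hu Hv Heq.
    rewrite <- (rn_KV R u), <- (rn_KV R v). f_equal. apply Hg; auto.
  - intros e He'. destruct (He _ He') as [[p [q [Hpq Hx]]] Hv]. split.
    + exists (rn R (fst p), snd p), (rn R (fst q), snd q). split.
      * intro E. apply Hpq. destruct p, q; simpl in E. injection E; intros; subst.
        f_equal. apply (rn_inj R); auto.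
      * intros [x i]. split.
        -- intros Hxi.
           assert (H : edge_pre (rn R) e (rn_inv R x, i))
             by (unfold edge_pre; simpl; rewrite rn_KV; exact Hxi).
           apply Hx in H. destruct H as [H|H]; [left|right]; rewrite <- H; simpl;
           rewrite rn_KV; reflexivity.
        -- destruct p as [p1 p2], q as [q1 q2]; simpl.
           intros [H|H]; injection H; intros ? ?; subst.
           ++ exact (proj2 (Hx (p1,p2)) (or_introl eq_refl)).
           ++ exact (proj2 (Hx (q1,q2)) (or_intror eq_refl)).
    + intros p0 Hp. simpl. apply (Hv (rn_inv R (fst p0), snd p0)).
      unfold edge_pre; simpl; rewrite rn_KV; destruct p0; exact Hp.
  - intros e e' H1 H2 [p [Hp Hp']].
    assert (H : edge_pre (rn R) e = edge_pre (rn R) e').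
    { apply Hd; auto. exists (rn_inv R (fst p), snd p).
      unfold edge_pre; simpl; rewrite rn_KV; destruct p; auto. }
    rewrite <- (edge_pre_KV R e), <- (edge_pre_KV R e'), H. reflexivity.
  - intros v a H. exact (Hs _ _ H).
  - intros e a H. exact (Hdl _ _ H).
Qed.

Lemma wf_empty : wf (empty_graph V Sig Del Pi).
Proof.
  split; [|split; [|split; [|split]]]; simpl; try (intros; contradiction); try (intros; discriminate).
  exists (fun _ => 0). intros u v Hu. contradiction.
Qed.

Lemma CGD_rename r (f : pgraph V Sig Del Pi -> graph V Sig Del Pi) (R R' : renaming V) :
  (forall D, is_disk r D -> f (prename R D) = rename R' (f D)) ->
  Conj (CGD r f) R R'.
Proof.
  intros Hl G HG.
  assert (Key : forall i, gV G (rn_inv R i) ->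
     f (disk (rename R G) r i) = rename R' (f (disk G r (rn_inv R i)))).
  { intros i Hi. rewrite <- (rn_KV R i) at 1. rewrite disk_rename. apply Hl.
    exists G, (rn_inv R i). split; auto. }
  assert (Re : forall Phi : graph V Sig Del Pi -> Prop,
    (exists i, gV G (rn_inv R i) /\ Phi (f (disk (rename R G) r i))) =
    (exists u, gV G u /\ Phi (rename R' (f (disk G r u))))).
  { intro Phi. apply propositional_extensionality. split.
    - intros [i [Hi Hv]]. exists (rn_inv R i). rewrite Key in Hv; auto.
    - intros [u [Hu Hv]]. exists (rn R u).
      assert (Hi : gV G (rn_inv R (rn R u))) by (rewrite rn_K; auto).
      split; auto. rewrite Key; auto. rewrite rn_K; auto. }
  unfold CGD, gunion; apply graph_eq; simpl.
  - apply functional_extensionality; intro v. exact (Re (fun X => gV X v)).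
  - apply functional_extensionality; intro v. exact (Re (fun X => gE X v)).
  - apply functional_extensionality; intro v. f_equal.
    apply functional_extensionality; intro a. exact (Re (fun X => gsig X v = Some a)).
  - apply functional_extensionality; intro v. f_equal.
    apply functional_extensionality; intro a. exact (Re (fun X => gdel X v = Some a)).
Qed.

End Pf.

Theorem proposition4p19 (V Sig Del Pi : Type)
  (HV : uncountable V) (HPi : finite_type Pi)
  (r : nat) (f : pgraph V Sig Del Pi -> graph V Sig Del Pi)
  (Fbar : renaming V -> renaming V)
  (Hf : local_rule r f) (Hmono : monotonic_rule r f)
  (HConj : forall R R' : renaming V, Conj (CGD r f) R R' <-> R' = Fbar R) :
  ftilde_is_functor r f Fbar.
Proof.
  assert (Cself : forall m, Conj (CGD r f) m (Fbar m))
    by (intro m; apply (proj2 (HConj m (Fbar m))); reflexivity).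
  destruct Hf as [Hwf [Hren _]].
  assert (Hobj : forall X, Dobj r X -> wf (ftilde_obj f X)).
  { intros X [[c [Hc HD]] | HX].
    - unfold ftilde_obj; rewrite Hc. apply Hwf; exact HD.
    - subst X. apply wf_empty. }
  unfold ftilde_is_functor. split; [exact Hobj| split; [| split]].
  - intros X Y m [HX [HY [[HwX [HwY Hsub]] Hc]]].
    split; [apply Hobj; auto| split; [apply Hobj; auto|]].
    destruct HX as [[c [Hcx HD]] | HX].
    + pose proof (Hc c Hcx) as Hcy. unfold ftilde_obj; rewrite Hcx, Hcy.
      destruct (Hren m) as [R' HR'].
      assert (E : R' = Fbar m) by (apply (proj1 (HConj m R')); apply CGD_rename; auto).
      subst R'. rewrite <- HR' by auto. apply Hmono.
      * destruct HD as [G [c' [HG [Hc' HE]]]]. exists (rename m G), (rn m c').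
        split; [apply wf_rename; auto| split; [simpl; rewrite rn_K; auto|]].
        rewrite HE, disk_rename; reflexivity.
      * destruct HY as [[c2 [Hc2 HD2]]|HY].
        -- rewrite Hcy in Hc2; injection Hc2; intro; subst; auto.
        -- subst Y; simpl in Hcy; discriminate.
      * split; simpl; auto.
    + subst X. unfold ftilde_obj at 1; simpl.
      split; [|split; [|split]]; simpl; intros; try contradiction; try discriminate.
  - intros X _. symmetry. apply (proj1 (HConj _ _)). intros G HG.
    rewrite !rename_rid. reflexivity.
  - intros X Y Z m1 m2 _ _. symmetry. apply (proj1 (HConj _ _)). intros G HG.
    change (rename (rcomp m2 m1) G) with (rename m2 (rename m1 G)).
    rewrite (Cself m2) by (apply wf_rename; auto). rewrite (Cself m1) by auto.
    reflexivity.
Qed.
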